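(* Let $N$ be a nonnegative integer and let $f,a_1,d_1,d_2\in\mathbb{C}$ be such that every hypergeometric series below is well defined (no lower parameter is a nonpositive integer) and the denominator in the definition of $k$ below is nonzero. Put $$h=1-f+d_1+d_2-N,\qquad k=\frac{h(1+d_1+a_1-f)(1+d_2+a_1-f)}{d_1d_2-h(1+d_1+d_2+a_1-f)}.$$ Then $$ {}_{7}F_{6}\left[\begin{matrix} f-1,\ \frac{f+1}{2},\ a_1,\ d_1,\ d_2,\ 2f-2-d_1-d_2-a_1+N,\ -N\\ \frac{f-1}{2},\ f-a_1,\ f-d_1,\ f-d_2,\ 2+a_1+d_1+d_2-f-N,\ f+N\end{matrix};1\right]$$ $$=\frac{(f)_N\,(f-d_1-d_2)_N\,(f-a_1-d_1-1)_N\,(f-a_1-d_2-1)_N}{(f-d_1)_N\,(f-d_2)_N\,(f-a_1)_N\,(f-a_1-d_1-d_2-1)_N}\cdot\frac{(k+1)_N}{(k)_N}.$$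
   Context: $(x)_n$ denotes the Pochhammer symbol: $(x)_0=1$, $(x)_n=x(x+1)\cdots(x+n-1)$ for $n\ge1$. The generalized hypergeometric function is $${}_{r+1}F_{r}\left[\begin{matrix} a_1,\dots,a_{r+1}\\ b_1,\dots,b_r\end{matrix};z\right]=\sum_{n=0}^{\infty}\frac{(a_1)_n\cdots(a_{r+1})_n}{(b_1)_n\cdots(b_r)_n\,n!}z^n ,$$ where no $b_i$ is a nonpositive integer; when one upper parameter equals $-N$ with $N$ a nonnegative integer the series terminates. *)

(* Defs.v *)
(* The complex numbers are modelled as R[i] = complex R
   for an arbitrary R : realType (so R[i] is a copy of C). *)
From HB Require Import structures.
From mathcomp Require Import all_boot all_order all_algebra.
From mathcomp Require Import complex.
From mathcomp Require Import reals.
Set Implicit Arguments. Unset Strict Implicit. Unset Printing Implicit Defensive.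
Import Order.TTheory GRing.Theory Num.Theory.
Local Open Scope ring_scope.

Definition poch {F : ringType} (x : F) (n : nat) : F :=
  \prod_(i < n) (x + i%:R).

(* When one upper parameter equals -M, all terms with n > M vanish,
   so this equals the full (infinite) series. *)
Definition hypergeomT {F : fieldType} (As Bs : seq F) (z : F) (M : nat) : F :=
  \sum_(n < M.+1)
     (\prod_(a <- As) poch a n) / ((\prod_(b <- Bs) poch b n) * (n`!)%:R) * z ^+ n.

Definition not_nonpos_int {F : ringType} (b : F) : Prop :=
  forall m : nat, b <> - (m%:R).

(* Main.v *)
Require Import Defs.
From HB Require Import structures.
From mathcomp Require Import all_boot all_order all_algebra.
From mathcomp Require Import complex.
From mathcomp Require Import reals.
From mathcomp Require Import fraction.
From mathcomp Require Import ring zify.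
Import Order.TTheory GRing.Theory Num.Theory.
Local Open Scope ring_scope.


Lemma poch0 (F : ringType) (x : F) : poch x 0 = 1.
Proof. by rewrite /poch big_ord0. Qed.

Lemma pochS (F : ringType) (x : F) n : poch x n.+1 = poch x n * (x + n%:R).
Proof. by rewrite /poch big_ord_recr. Qed.

Lemma poch_shift (F : comRingType) (x : F) n :
  x * poch (x + 1) n = poch x n * (x + n%:R).
Proof.
elim: n => [|n IH]; first by rewrite !poch0 addr0 mulr1 mul1r.
rewrite !pochS mulrA IH -!natr1; ring.
Qed.

Lemma poch_split (F : comRingType) (x : F) n m :
  poch x (n + m) = poch x n * poch (x + n%:R) m.
Proof.
elim: m => [|m IH]; first by rewrite addn0 poch0 mulr1.
rewrite addnS !pochS IH natrD; ring.
Qed.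

Lemma fact_poch (F : comRingType) n : (n`!)%:R = poch (1 : F) n.
Proof.
elim: n => [|n IH]; first by rewrite poch0.
by rewrite factS natrM pochS IH -nat1r; ring.
Qed.

Lemma rmorph_poch (R1 R2 : comRingType) (phi : {rmorphism R1 -> R2}) x n :
  phi (poch x n) = poch (phi x) n.
Proof.
elim: n => [|n IH]; first by rewrite !poch0 rmorph1.
by rewrite !pochS rmorphM rmorphD rmorph_nat IH.
Qed.

Lemma poch_neq0 (F : fieldType) (x : F) n :
  (forall i, (i < n)%N -> x + i%:R != 0) -> poch x n != 0.
Proof.
move=> H; rewrite /poch; apply/prodf_neq0 => i _; exact: H.
Qed.

Lemma poch_nonpos (F : fieldType) (x : F) n : not_nonpos_int x -> poch x n != 0.
Proof.
move=> H; apply: poch_neq0 => i _; apply/eqP => E.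
apply: (H i); rewrite -[x](addrK i%:R) E; ring.
Qed.

Definition Kp {R : comRingType} (a b c d N : R) : R :=
 (-N -N^+2 -d*N^+2 +d^+2*N -c*N^+2 +2*c*d*N -c*d^+2 +c^+2*N -c^+2*d -b*N^+2 +2*b*d*N -b*d^+2 +2*b*c*N -2*b*c*d -b*c^+2 +b^+2*N -b^+2*d -b^+2*c -a -a*N +a*N^+2 -3*a*d*N +a*d^+2 -3*a*c*N +3*a*c*d +a*c^+2 -3*a*b*N +3*a*b*d +3*a*b*c +a*b^+2 +2*a^+2*N -2*a^+2*d -2*a^+2*c -2*a^+2*b +a^+3).

Definition uuF {R : comRingType} (f b c d N : R) : R :=
  (1 - f + c + d - N) * (1 + c + b - f) * (1 + d + b - f)
  + N * (c * d - (1 - f + c + d - N) * (1 + c + d + b - f)).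

Definition Us {R : ringType} (i2 f b c d : R) (N : nat) : seq R :=
  [:: f - 1; (f + 1) * i2; b; c; d; 2 * f - 2 - c - d - b + N%:R; - N%:R].
Definition Ls {R : ringType} (i2 f b c d : R) (N : nat) : seq R :=
  [:: (f - 1) * i2; f - b; f - c; f - d; 2 + b + c + d - f - N%:R; f + N%:R].



Definition AA {F : fieldType} (f b c d N : F) :=
  let e := 2*f - 2 - c - d - b + N in
  (f+N)*(e+N+1)/((f+N-b)*(f+N-c)*(f+N-d)*e*(f-1-e)*uuF f b c d N).
Definition qq {F : fieldType} (f b c d N n : F) :=
  AA f b c d N * (n*(n+(f-1)-1) + Kp (f-1) b c d N).
Definition rho {F : fieldType} (f b c d N : F) :=
  let e := 2*f - 2 - c - d - b + N in
  - ((f+N)*(f-c-d+N)*(f-b-c-1+N)*(f-b-d-1+N)/((f+N-c)*(f+N-d)*(f+N-b)*(f-1-e))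
  * uuF f b c d (N+1) * (1-f+c+d-N) / (uuF f b c d N * (1-f+c+d-(N+1)))).
Definition gg {F : fieldType} (f b c d N n : F) :=
  let e := 2*f - 2 - c - d - b + N in
  ((f-1)+n)*(b+n)*(c+n)*(d+n)*(e+n)*qq f b c d N (n+1)/(((f-1)+2*n)*(f+N+n)).
Definition kap {F : fieldType} (f b c d N n : F) :=
  let e := 2*f - 2 - c - d - b + N in
  (e+n)*(N+1)*(f-1-e+n)*(f+N)/(e*(N+1-n)*(f-1-e)*(f+N+n)).
Definition Phi {F : fieldType} (f b c d N n : F) :=
  let e := 2*f - 2 - c - d - b + N in
  - (qq f b c d N n * n*((f-1)-b+n)*((f-1)-c+n)*((f-1)-d+n)*(f-1-e+n)/(((f-1)+2*n)*(N+1-n))).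
Definition rrF {F : fieldType} (f b c d N n : F) :=
  let a := f - 1 in let e := 2*f - 2 - c - d - b + N in
  let l := 2 + b + c + d - f - N in
  ((f-1+n)*((f+1)/2+n)*(b+n)*(c+n)*(d+n)*(e+n)*(-N+n))
  / (((f-1)/2+n)*(f-b+n)*(f-c+n)*(f-d+n)*(l+n)*(f+N+n)*(n+1)).


Ltac unf := rewrite /rrF /Phi /kap /gg /rho /qq /AA /Kp.

Lemma I0 (F : fieldType) (f b c d N : F) :
  f + N != 0 -> f - 1 != 0 -> uuF f b c d N != 0 ->
  f - 1 - (2 * f - 2 - c - d - b + N) != 0 -> 2 * f - 2 - c - d - b + N != 0 ->
  f + N - d != 0 -> f + N - c != 0 -> f + N - b != 0 -> 1 - f + c + d - (N + 1) != 0 ->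
  1 - rho f b c d N + gg f b c d N 0 = 0.
Proof. move=> h1 h2 h3 h4 h5 h6 h7 h8 h9; unf; rewrite /uuF in h3 *. field. by rewrite h1 h2 h3 h4 h5 h6 h7 h8 h9. Qed.

Lemma I1 (F : fieldType) (f b c d N n : F) :
  N + 1 - n != 0 -> f - 1 + 2 * n != 0 -> uuF f b c d N != 0 ->
  f - 1 - (2 * f - 2 - c - d - b + N) != 0 -> 2 * f - 2 - c - d - b + N != 0 ->
  f + N - d != 0 -> f + N - c != 0 -> f + N - b != 0 -> f + N + n != 0 -> 1 - f + c + d - (N + 1) != 0 ->
  kap f b c d N n - rho f b c d N + gg f b c d N n - Phi f b c d N n = 0.
Proof. move=> h1 h2 h3 h4 h5 h6 h7 h8 h9 h10; unf; rewrite /uuF in h3 *. field. by rewrite h1 h2 h3 h4 h5 h6 h7 h8 h9 h10. Qed.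

Lemma Ir (F : fieldType) (f b c d N m : F) :
  f + N + m != 0 -> f - 1 + 2 * m != 0 -> N + 1 - (m + 1) != 0 ->
  f - 1 + 2 * (m + 1) != 0 -> 2 != 0 :> F -> m + 1 != 0 ->
  2 + b + c + d - f - N + m != 0 -> f - d + m != 0 -> f - c + m != 0 -> f - b + m != 0 ->
  rrF f b c d N m * Phi f b c d N (m+1) - gg f b c d N m = 0.
Proof. move=> h1 h2 h3 h4 h5 h6 h7 h8 h9 h10; rewrite /rrF /Phi /gg. field. by rewrite h1 h2 h3 h4 h5 h6 h7 h8 h9 h10. Qed.

Lemma Ilast (F : fieldType) (f b c d N : F) :
  f + N + N != 0 -> f - 1 + 2 * N != 0 -> uuF f b c d N != 0 ->
  f - 1 - (2 * f - 2 - c - d - b + N) != 0 -> 2 * f - 2 - c - d - b + N != 0 ->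
  f + N - d != 0 -> f + N - c != 0 -> f + N - b != 0 -> 2 != 0 :> F -> N + 1 != 0 ->
  f + (N + 1) + N != 0 -> 2 + b + c + d - f - (N + 1) + N != 0 -> N + 1 - N != 0 ->
  kap f b c d N N * rrF f b c d (N+1) N - gg f b c d N N = 0.
Proof. move=> h1 h2 h3 h4 h5 h6 h7 h8 h9 h10 h11 h12 h13; unf; rewrite /uuF in h3 *. field. by rewrite h1 h2 h3 h4 h5 h6 h7 h8 h9 h10 h11 h12 h13. Qed.


Lemma ne0_eq {F : ringType} {x y : F} : y != 0 -> x = y -> x != 0.
Proof. by move=> H ->. Qed.

Definition gen {F0 F : fieldType} (io : {rmorphism F0 -> F}) (f : F) : Prop :=
  (forall p : {poly F0}, p != 0 -> (map_poly io p).[f] != 0) /\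
  (forall m : nat, (m.+1)%:R != 0 :> F0).

Lemma natF {F0 F : fieldType} {io : {rmorphism F0 -> F}} {f : F} :
  gen io f -> forall m, (m.+1)%:R != 0 :> F.
Proof. by case=> _ Hc m; rewrite -(rmorph_nat io) fmorph_eq0. Qed.

Lemma atom {F0 F : fieldType} {io : {rmorphism F0 -> F}} {f : F} (s k : F0) :
  gen io f -> s != 0 -> io s * f + io k != 0.
Proof.
case=> Ht _ Hs.
have Hp : 'X * s%:P + k%:P != 0.
  apply/eqP => /(congr1 (fun p : {poly F0} => p`_1)).
  rewrite coefD coefMC coefX coefC /= coef0 mul1r addr0 => E.
  by move: Hs; rewrite E eqxx.
have := Ht _ Hp.
by rewrite rmorphD rmorphM /= map_polyX !map_polyC /= !hornerE mulrC.
Qed.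

Lemma atom1 {F0 F : fieldType} {io : {rmorphism F0 -> F}} {f : F} (k : F0) :
  gen io f -> f + io k != 0.
Proof. move=> HG; have := atom 1 k HG (oner_neq0 F0); by rewrite rmorph1 mul1r. Qed.

Lemma atomm {F0 F : fieldType} {io : {rmorphism F0 -> F}} {f : F} (k : F0) :
  gen io f -> io k - f != 0.
Proof.
move=> HG; have H1 : (-1 : F0) != 0 by rewrite oppr_eq0 oner_eq0.
have := atom _ k HG H1.
by rewrite rmorphN rmorph1 mulN1r addrC.
Qed.

Lemma atom2 {F0 F : fieldType} {io : {rmorphism F0 -> F}} {f : F} (k : F0) :
  gen io f -> 2 * f + io k != 0.
Proof.
move=> HG; have := atom 2 k HG (proj2 HG 1); by rewrite rmorph_nat.
Qed.

Lemma atomh {F0 F : fieldType} {io : {rmorphism F0 -> F}} {f : F} (k : F0) :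
  gen io f -> f / 2 + io k != 0.
Proof.
move=> HG; have H2 : (2 : F0)^-1 != 0 by rewrite invr_eq0 (proj2 HG 1).
have := atom _ k HG H2; by rewrite fmorphV rmorph_nat mulrC.
Qed.

Lemma atomu {F0 F : fieldType} {io : {rmorphism F0 -> F}} {f : F} (b c d t : F0) :
  gen io f -> uuF f (io b) (io c) (io d) (io t) != 0.
Proof.
case=> Ht _.
pose H0 := 1 + c + d - t. pose X0 := 1 + c + b. pose Y0 := 1 + d + b. pose Z0 := 1 + c + d + b.
pose a2 := H0 + X0 + Y0 - t.
pose a1 := - (H0 * X0 + H0 * Y0 + X0 * Y0) + t * (H0 + Z0).
pose a0 := H0 * X0 * Y0 + t * (c * d - H0 * Z0).
pose p : {poly F0} := - 'X^3 + a2 *: 'X^2 + a1 *: 'X + a0%:P.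
have Hp : p != 0.
  apply/eqP => /(congr1 (fun p : {poly F0} => p`_3)).
  rewrite /p !coefD coefN !coefZ !coefXn coefX coefC /= coef0 !mulr0 !addr0 => /eqP.
  by rewrite oppr_eq0 oner_eq0.
have := Ht _ Hp.
rewrite /p !rmorphD rmorphN /= !map_polyZ /= !map_polyXn map_polyX !map_polyC /= !(hornerD, hornerN, hornerZ, hornerXn, hornerX, hornerC).
rewrite /a2 /a1 /a0 /uuF /H0 /X0 /Y0 /Z0 ?rmorphD ?rmorphB ?rmorphN ?rmorphM ?rmorph1.
apply: contra_neq => E; rewrite -E; ring.
Qed.


Definition Tm {F : fieldType} (f b c d : F) (N n : nat) : F :=
  (\prod_(x <- Us 2^-1 f b c d N) poch x n) /
  ((\prod_(x <- Ls 2^-1 f b c d N) poch x n) * (n`!)%:R) * 1 ^+ n.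

Lemma T0 (F : fieldType) (f b c d : F) N : Tm f b c d N 0 = 1.
Proof. by rewrite /Tm !big_cons !big_nil !poch0 !mulr1 invr1 mulr1. Qed.

Lemma Tlast0 (F : fieldType) (f b c d : F) N : Tm f b c d N N.+1 = 0.
Proof. by rewrite /Tm !big_cons !big_nil [poch (- _) _]pochS addNr !(mulr0, mul0r). Qed.

Lemma R1 (F : fieldType) (f b c d : F) N n :
  Tm f b c d N n.+1 = Tm f b c d N n * rrF f b c d N%:R n%:R.
Proof.
rewrite /Tm /rrF /Us /Ls !big_cons !big_nil !pochS factS natrM -[n.+1%:R]natr1 !expr1n !mulr1.
rewrite !invfM; ring.
Qed.

Lemma poch_back (F : fieldType) (x y : F) n :
  x + 1 = y -> x + n%:R != 0 -> poch x n = x * poch y n / (x + n%:R).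
Proof.
move=> <- hx; have := @poch_shift _ x n => ->.
by rewrite mulfK.
Qed.

Lemma poch_fwd (F : fieldType) (x y : F) n :
  x + 1 = y -> x != 0 -> poch y n = poch x n * (x + n%:R) / x.
Proof.
move=> <- hx; have := @poch_shift _ x n => <-.
by rewrite mulrAC divff // mul1r.
Qed.

Lemma R2 (F : fieldType) (f b c d : F) N n :
  poch ((f - 1) / 2) n != 0 -> poch (f - b) n != 0 -> poch (f - c) n != 0 ->
  poch (f - d) n != 0 -> poch (2 + b + c + d - f - N%:R) n != 0 ->
  poch (f + N%:R) n != 0 -> (n`!)%:R != 0 :> F ->
  2 * f - 2 - c - d - b + N%:R != 0 -> - (N.+1)%:R + n%:R != 0 :> F ->
  2 + b + c + d - f - (N.+1)%:R + n%:R != 0 -> f + N%:R != 0 ->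
  N%:R + 1 - n%:R != 0 :> F -> f - 1 - (2 * f - 2 - c - d - b + N%:R) != 0 ->
  f + N%:R + n%:R != 0 ->
  Tm f b c d N.+1 n = Tm f b c d N n * kap f b c d N%:R n%:R.
Proof.
move=> h1 h2 h3 h4 h5 h6 h7 h8 h9 h10 h11 h12 h13 h14.
rewrite /Tm /Us /Ls !big_cons !big_nil !expr1n !mulr1.
rewrite (@poch_fwd _ (2 * f - 2 - c - d - b + N%:R) (2 * f - 2 - c - d - b + (N.+1)%:R)) //; last by rewrite -[(N.+1)%:R]natr1; ring.
rewrite (@poch_back _ (- (N.+1)%:R) (- N%:R)) //; last by rewrite -[(N.+1)%:R]natr1; ring.
rewrite (@poch_back _ (2 + b + c + d - f - (N.+1)%:R) (2 + b + c + d - f - N%:R)) //; last by rewrite -[(N.+1)%:R]natr1; ring.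
rewrite (@poch_fwd _ (f + N%:R) (f + (N.+1)%:R)) //; last by rewrite -[(N.+1)%:R]natr1; ring.
rewrite /kap; field.
by rewrite -[(N.+1)%:R]nat1r in h9 h10; rewrite h1 h2 h3 h4 h5 h6 h7 h8 h9 h10 h11 h12 h13 h14.
Qed.


Definition PN {R : comRingType} (f b c d : R) N :=
  poch f N * poch (f - c - d) N * poch (f - b - c - 1) N * poch (f - b - d - 1) N.
Definition PD {R : comRingType} (f b c d : R) N :=
  poch (f - c) N * poch (f - d) N * poch (f - b) N * poch (f - b - c - d - 1) N.
Definition hXY {R : comRingType} (f b c d N : R) :=
  (1 - f + c + d - N) * (1 + c + b - f) * (1 + d + b - f).
Definition Rg {F : fieldType} (f b c d : F) N :=
  PN f b c d N * uuF f b c d N%:R / (PD f b c d N * hXY f b c d N%:R).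

Lemma Rstep (F : fieldType) (f b c d : F) N :
  1 + d + b - f != 0 -> 1 + c + b - f != 0 -> 1 - f + c + d - N%:R != 0 ->
  poch (f - b - c - d - 1) N != 0 -> poch (f - b) N != 0 ->
  poch (f - d) N != 0 -> poch (f - c) N != 0 ->
  1 - f + c + d - (N%:R + 1) != 0 -> uuF f b c d N%:R != 0 ->
  f - 1 - (2 * f - 2 - c - d - b + N%:R) != 0 ->
  f + N%:R - b != 0 -> f + N%:R - d != 0 -> f + N%:R - c != 0 ->
  f - b - c - d - 1 + N%:R != 0 ->
  Rg f b c d N.+1 = rho f b c d N%:R * Rg f b c d N.
Proof.
move=> h1 h2 h3 h4 h5 h6 h7 h8 h9 h10 h11 h12 h13 h14.
rewrite /Rg /PN /PD /hXY !pochS -[(N.+1)%:R]natr1 /rho.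
field.
by rewrite h1 h2 h3 h4 h5 h6 h7 h8 h9 h10 h11 h12 h13 h14.
Qed.

Lemma Rbase (F : fieldType) (f b c d : F) :
  1 + d + b - f != 0 -> 1 + c + b - f != 0 -> 1 - f + c + d - 0%:R != 0 ->
  Rg f b c d 0 = 1.
Proof.
move=> h1 h2 h3.
rewrite /Rg /PN /PD /hXY /uuF !poch0 !mulr1 !mul1r mul0r addr0 divff //.
by rewrite !mulf_neq0.
Qed.


Lemma natd {F0 F : fieldType} {io : {rmorphism F0 -> F}} {f : F} (k m : nat) :
  gen io f -> (m < k)%N -> (k%:R - m%:R : F) != 0.
Proof.
move=> HG hmk; rewrite -natrB ?(ltnW hmk) //.
have -> : (k - m = (k - m).-1.+1)%N by rewrite prednK // subn_gt0.
exact: natF HG _.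
Qed.

Lemma natdn {F0 F : fieldType} {io : {rmorphism F0 -> F}} {f : F} (k m : nat) :
  gen io f -> (m < k)%N -> (m%:R - k%:R : F) != 0.
Proof. move=> HG hmk; rewrite -oppr_eq0 opprB; exact: (natd k m HG hmk). Qed.

Ltac rms := rewrite ?(rmorphD, rmorphB, rmorphN, rmorphM, rmorph_nat, rmorph1, fmorphV).
Ltac nz1 k := match goal with HG : gen _ _ |- _ => apply: (ne0_eq (atom1 k HG)); rms; ring end.
Ltac nzm k := match goal with HG : gen _ _ |- _ => apply: (ne0_eq (atomm k HG)); rms; ring end.
Ltac nz2 k := match goal with HG : gen _ _ |- _ => apply: (ne0_eq (atom2 k HG)); rms; ring end.
Ltac nzh k := match goal with HG : gen _ _ |- _ => apply: (ne0_eq (atomh k HG)); rms; field; apply: (ne0_eq (natF HG 1)); ring end.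
Ltac nzd k m := match goal with HG : gen _ _ |- _ =>
  apply: (ne0_eq (natd k m HG ltac:(lia))); ring end.

Ltac nzdn k m := match goal with HG : gen _ _ |- _ =>
  apply: (ne0_eq (natdn k m HG ltac:(lia))); ring end.

Lemma factF {F0 F : fieldType} {io : {rmorphism F0 -> F}} {f : F} n :
  gen io f -> (n`!)%:R != 0 :> F.
Proof. by move=> HG; rewrite -(prednK (fact_gt0 n)); exact: natF HG _. Qed.

Lemma R2g {F0 F : fieldType} {io : {rmorphism F0 -> F}} {f : F} (b0 c0 d0 : F0) N n :
  gen io f -> (n <= N)%N ->
  Tm f (io b0) (io c0) (io d0) N.+1 n = Tm f (io b0) (io c0) (io d0) N n * kap f (io b0) (io c0) (io d0) N%:R n%:R.
Proof.
move=> HG hn; apply: R2.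
- apply: poch_neq0 => i _; nzh (i%:R - (2 : F0)^-1 : F0).
- apply: poch_neq0 => i _; nz1 (i%:R - b0 : F0).
- apply: poch_neq0 => i _; nz1 (i%:R - c0 : F0).
- apply: poch_neq0 => i _; nz1 (i%:R - d0 : F0).
- apply: poch_neq0 => i _; nzm (2 + b0 + c0 + d0 - N%:R + i%:R : F0).
- apply: poch_neq0 => i _; nz1 (N%:R + i%:R : F0).
- exact: (factF n HG).
- nz2 (-2 - c0 - d0 - b0 + N%:R : F0).
- nzdn N.+1 n.
- nzm (2 + b0 + c0 + d0 - (N.+1)%:R + n%:R : F0).
- nz1 (N%:R : F0).
- nzd N.+1 n.
- nzm (1 + b0 + c0 + d0 - N%:R : F0).
- nz1 (N%:R + n%:R : F0).
Qed.

Definition Gt {F : fieldType} (f b c d : F) N n :=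
  if n is m.+1 then - (Tm f b c d N m * gg f b c d N%:R m%:R) else 0.

Lemma comb1 (F : comRingType) (T r k rh g1 g0 P : F) :
  k - rh + g1 - P = 0 -> r * P - g0 = 0 ->
  T * r * k - rh * (T * r) = - (T * r * g1) - - (T * g0).
Proof.
move=> H1 H2; apply/subr0_eq.
transitivity (T * (r * (k - rh + g1 - P)) + T * (r * P - g0)); first ring.
by rewrite H1 H2; ring.
Qed.

Lemma comb2 (F : comRingType) (T k r rh g1 g : F) :
  k * r - g = 0 ->
  T * k * r - rh * 0 = - (0 * g1) - - (T * g).
Proof.
move=> H; apply/subr0_eq.
transitivity (T * (k * r - g)); first ring.
by rewrite H; ring.
Qed.

Lemma comb0 (F : comRingType) (rh g0 : F) :
  1 - rh + g0 = 0 -> 1 - rh * 1 = - (1 * g0) - 0.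
Proof.
move=> H; apply/subr0_eq.
transitivity (1 - rh + g0); first ring.
by rewrite H.
Qed.

Lemma keyg {F0 F : fieldType} {io : {rmorphism F0 -> F}} {f : F} (b0 c0 d0 : F0) N n :
  gen io f -> (n < N.+2)%N ->
  Tm f (io b0) (io c0) (io d0) N.+1 n - rho f (io b0) (io c0) (io d0) N%:R * Tm f (io b0) (io c0) (io d0) N n
  = Gt f (io b0) (io c0) (io d0) N n.+1 - Gt f (io b0) (io c0) (io d0) N n.
Proof.
move=> HG; case: n => [_ | m Hm].
  rewrite /Gt !T0 (_ : 0%:R = 0) //; apply: comb0; apply: I0.
  - nz1 (N%:R : F0).
  - nz1 (-1 : F0).
  - apply: (ne0_eq (atomu b0 c0 d0 N%:R HG)); rms; done.
  - nzm (1 + b0 + c0 + d0 - N%:R : F0).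
  - nz2 (-2 - c0 - d0 - b0 + N%:R : F0).
  - nz1 (N%:R - d0 : F0).
  - nz1 (N%:R - c0 : F0).
  - nz1 (N%:R - b0 : F0).
  - nzm (1 + c0 + d0 - N%:R - 1 : F0).
have [hm | hm] := ltnP m N.
  rewrite /Gt R2g // R1 -[(m.+1)%:R]natr1.
  apply: comb1.
    apply: I1.
    - nzd N.+1 m.+1.
    - nz1 (-1 + 2 * (m%:R + 1) : F0).
    - apply: (ne0_eq (atomu b0 c0 d0 N%:R HG)); rms; done.
    - nzm (1 + b0 + c0 + d0 - N%:R : F0).
    - nz2 (-2 - c0 - d0 - b0 + N%:R : F0).
    - nz1 (N%:R - d0 : F0).
    - nz1 (N%:R - c0 : F0).
    - nz1 (N%:R - b0 : F0).
    - nz1 (N%:R + m%:R + 1 : F0).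
    - nzm (1 + c0 + d0 - N%:R - 1 : F0).
  apply: Ir.
  - nz1 (N%:R + m%:R : F0).
  - nz1 (-1 + 2 * m%:R : F0).
  - nzd N.+1 m.+1.
  - nz1 (-1 + 2 * (m%:R + 1) : F0).
  - exact: (natF HG 1).
  - rewrite natr1; exact: (natF HG m).
  - nzm (2 + b0 + c0 + d0 - N%:R + m%:R : F0).
  - nz1 (m%:R - d0 : F0).
  - nz1 (m%:R - c0 : F0).
  - nz1 (m%:R - b0 : F0).
have -> : m = N by apply/eqP; rewrite eqn_leq hm andbT -ltnS.
rewrite /Gt Tlast0 R1 R2g // -[(N.+1)%:R]natr1.
apply: comb2; apply: Ilast.
- nz1 (N%:R + N%:R : F0).
- nz1 (-1 + 2 * N%:R : F0).
- apply: (ne0_eq (atomu b0 c0 d0 N%:R HG)); rms; done.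
- nzm (1 + b0 + c0 + d0 - N%:R : F0).
- nz2 (-2 - c0 - d0 - b0 + N%:R : F0).
- nz1 (N%:R - d0 : F0).
- nz1 (N%:R - c0 : F0).
- nz1 (N%:R - b0 : F0).
- exact: (natF HG 1).
- rewrite natr1; exact: (natF HG N).
- nz1 (N%:R + 1 + N%:R : F0).
- nzm (2 + b0 + c0 + d0 - (N%:R + 1) + N%:R : F0).
- by rewrite addrAC subrr add0r oner_neq0.
Qed.


Lemma Sstep {F0 F : fieldType} {io : {rmorphism F0 -> F}} {f : F} (b0 c0 d0 : F0) N :
  gen io f ->
  \sum_(n < N.+2) Tm f (io b0) (io c0) (io d0) N.+1 n
  = rho f (io b0) (io c0) (io d0) N%:R * \sum_(n < N.+1) Tm f (io b0) (io c0) (io d0) N n.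
Proof.
move=> HG.
have T := @telescope_sumr_eq _ 0 N.+2 (Gt f (io b0) (io c0) (io d0) N)
  (fun n => Tm f (io b0) (io c0) (io d0) N.+1 n - rho f (io b0) (io c0) (io d0) N%:R * Tm f (io b0) (io c0) (io d0) N n)
  (leq0n _) (fun k hk => keyg b0 c0 d0 N k HG (andP hk).2).
rewrite big_mkord sumrB -mulr_sumr /Gt /= Tlast0 mul0r !oppr0 !addr0 in T.
have E2 : \sum_(i < N.+2) Tm f (io b0) (io c0) (io d0) N i = \sum_(i < N.+1) Tm f (io b0) (io c0) (io d0) N i.
  by rewrite big_ord_recr /= (_ : Tm f (io b0) (io c0) (io d0) N (@ord_max N.+1) = 0) ?addr0 //; exact: Tlast0.
rewrite E2 in T.
by apply/eqP; rewrite -subr_eq0 T.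
Qed.

Lemma gen_sum {F0 F : fieldType} {io : {rmorphism F0 -> F}} {f : F} (b0 c0 d0 : F0) N :
  gen io f ->
  \sum_(n < N.+1) Tm f (io b0) (io c0) (io d0) N n = Rg f (io b0) (io c0) (io d0) N.
Proof.
move=> HG; elim: N => [|N IH].
  rewrite big_ord_recl big_ord0 addr0 T0 Rbase //.
  - nzm (1 + d0 + b0 : F0).
  - nzm (1 + c0 + b0 : F0).
  - nzm (1 + c0 + d0 - 0%:R : F0).
rewrite Sstep // IH Rstep //.
- nzm (1 + d0 + b0 : F0).
- nzm (1 + c0 + b0 : F0).
- nzm (1 + c0 + d0 - N%:R : F0).
- apply: poch_neq0 => i _; nz1 (- b0 - c0 - d0 - 1 + i%:R : F0).
- apply: poch_neq0 => i _; nz1 (i%:R - b0 : F0).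
- apply: poch_neq0 => i _; nz1 (i%:R - d0 : F0).
- apply: poch_neq0 => i _; nz1 (i%:R - c0 : F0).
- nzm (1 + c0 + d0 - N%:R - 1 : F0).
- apply: (ne0_eq (atomu b0 c0 d0 N%:R HG)); rms; done.
- nzm (1 + b0 + c0 + d0 - N%:R : F0).
- nz1 (N%:R - b0 : F0).
- nz1 (N%:R - d0 : F0).
- nz1 (N%:R - c0 : F0).
- nz1 (- b0 - c0 - d0 - 1 + N%:R : F0).
Qed.


Definition LC {R : comRingType} (i2 f b c d : R) N :=
  \sum_(n < N.+1) (\prod_(x <- Us i2 f b c d N) poch x n) *
     (\prod_(x <- Ls i2 f b c d N) poch (x + n%:R) (N - n)) * poch (1 + n%:R) (N - n).
Definition DL {R : comRingType} (i2 f b c d : R) N :=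
  (\prod_(x <- Ls i2 f b c d N) poch x N) * poch 1 N.

Lemma prod_split (R : comRingType) (s : seq R) n N : (n <= N)%N ->
  \prod_(x <- s) poch x N = \prod_(x <- s) poch x n * \prod_(x <- s) poch (x + n%:R) (N - n).
Proof.
move=> hn; rewrite -big_split; apply: eq_bigr => x _ /=.
by rewrite -{1}(subnKC hn) poch_split.
Qed.

Lemma sumT_DL (F : fieldType) (f b c d : F) N :
  (\prod_(x <- Ls 2^-1 f b c d N) poch x N) != 0 -> (N`!)%:R != 0 :> F ->
  (\sum_(n < N.+1) Tm f b c d N n) * DL 2^-1 f b c d N = LC 2^-1 f b c d N.
Proof.
move=> hP hF; rewrite /LC mulr_suml; apply: eq_bigr => [[n hn]] _ /=.
have hn' : (n <= N)%N by [].
have E1 : poch (1 : F) N = poch 1 n * poch (1 + n%:R) (N - n).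
  by rewrite -{1}(subnKC hn') poch_split.
rewrite fact_poch E1 in hF.
rewrite (prod_split _ _ _ _ hn') in hP.
move: hP hF; rewrite !mulf_eq0 !negb_or => /andP [hP1 hP2] /andP [hF1 hF2].
rewrite /DL /Tm (prod_split _ _ _ _ hn') E1 fact_poch expr1n mulr1.
field.
by rewrite hP1 hF1.
Qed.

Lemma CI_gen {F0 F : fieldType} {io : {rmorphism F0 -> F}} {f : F} (b0 c0 d0 : F0) N :
  gen io f ->
  LC 2^-1 f (io b0) (io c0) (io d0) N * (PD f (io b0) (io c0) (io d0) N * hXY f (io b0) (io c0) (io d0) N%:R)
  = PN f (io b0) (io c0) (io d0) N * uuF f (io b0) (io c0) (io d0) N%:R * DL 2^-1 f (io b0) (io c0) (io d0) N.
Proof.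
move=> HG.
have hPD : PD f (io b0) (io c0) (io d0) N != 0.
  rewrite /PD !mulf_neq0 //.
  - apply: poch_neq0 => i _; nz1 (i%:R - c0 : F0).
  - apply: poch_neq0 => i _; nz1 (i%:R - d0 : F0).
  - apply: poch_neq0 => i _; nz1 (i%:R - b0 : F0).
  - apply: poch_neq0 => i _; nz1 (- b0 - c0 - d0 - 1 + i%:R : F0).
have hH : hXY f (io b0) (io c0) (io d0) N%:R != 0.
  rewrite /hXY !mulf_neq0 //.
  - nzm (1 + c0 + d0 - N%:R : F0).
  - nzm (1 + c0 + b0 : F0).
  - nzm (1 + d0 + b0 : F0).
rewrite -sumT_DL.
- rewrite gen_sum // /Rg; field. by rewrite hPD hH.
- rewrite /Ls !big_cons big_nil mulr1 !mulf_neq0 //.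
  + apply: poch_neq0 => i _; nzh (i%:R - (2 : F0)^-1 : F0).
  + apply: poch_neq0 => i _; nz1 (i%:R - b0 : F0).
  + apply: poch_neq0 => i _; nz1 (i%:R - c0 : F0).
  + apply: poch_neq0 => i _; nz1 (i%:R - d0 : F0).
  + apply: poch_neq0 => i _; nzm (2 + b0 + c0 + d0 - N%:R + i%:R : F0).
  + apply: poch_neq0 => i _; nz1 (N%:R + i%:R : F0).
- exact: (factF N HG).
Qed.

Ltac rmall := rewrite ?(rmorphM, rmorph_poch, rmorphD, rmorphB, rmorphN, rmorph_nat, rmorph1).

Lemma LC_morph (R1 R2 : comRingType) (phi : {rmorphism R1 -> R2}) i2 f b c d N :
  phi (LC i2 f b c d N) = LC (phi i2) (phi f) (phi b) (phi c) (phi d) N.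
Proof.
rewrite /LC rmorph_sum; apply: eq_bigr => n _.
by rewrite /Us /Ls !big_cons !big_nil; rmall.
Qed.

Lemma DL_morph (R1 R2 : comRingType) (phi : {rmorphism R1 -> R2}) i2 f b c d N :
  phi (DL i2 f b c d N) = DL (phi i2) (phi f) (phi b) (phi c) (phi d) N.
Proof. by rewrite /DL /Ls !big_cons !big_nil; rmall. Qed.

Lemma PD_morph (R1 R2 : comRingType) (phi : {rmorphism R1 -> R2}) f b c d N :
  phi (PD f b c d N) = PD (phi f) (phi b) (phi c) (phi d) N.
Proof. by rewrite /PD; rmall. Qed.

Lemma PN_morph (R1 R2 : comRingType) (phi : {rmorphism R1 -> R2}) f b c d N :
  phi (PN f b c d N) = PN (phi f) (phi b) (phi c) (phi d) N.
Proof. by rewrite /PN; rmall. Qed.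

Lemma hXY_morph (R1 R2 : comRingType) (phi : {rmorphism R1 -> R2}) f b c d N :
  phi (hXY f b c d N) = hXY (phi f) (phi b) (phi c) (phi d) (phi N).
Proof. by rewrite /hXY; rmall. Qed.

Lemma uuF_morph (R1 R2 : comRingType) (phi : {rmorphism R1 -> R2}) f b c d N :
  phi (uuF f b c d N) = uuF (phi f) (phi b) (phi c) (phi d) (phi N).
Proof. by rewrite /uuF; rmall. Qed.


Lemma CI_C (R : realType) (f b c d : R[i]) N :
  LC 2^-1 f b c d N * (PD f b c d N * hXY f b c d N%:R)
  = PN f b c d N * uuF f b c d N%:R * DL 2^-1 f b c d N.
Proof.
pose K := {fraction {poly R[i]}}.
pose io := [the {rmorphism R[i] -> K} of (@tofrac _ \o polyC)].
have HG : gen io (tofrac 'X).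
  split; last by move=> m; rewrite pnatr_eq0.
  move=> p hp.
  rewrite map_poly_comp horner_map /= -/(comp_poly 'X p) comp_polyXr.
  by rewrite tofrac_eq0.
have CIK := CI_gen b c d N HG.
have E2 : tofrac ((2^-1 : R[i])%:P) = (2^-1 : K).
  by rewrite -[LHS]/(io 2^-1) fmorphV rmorph_nat.
have CIP : LC (2^-1 : R[i])%:P 'X b%:P c%:P d%:P N * (PD 'X b%:P c%:P d%:P N * hXY 'X b%:P c%:P d%:P N%:R)
  = PN 'X b%:P c%:P d%:P N * uuF 'X b%:P c%:P d%:P N%:R * DL (2^-1 : R[i])%:P 'X b%:P c%:P d%:P N.
  apply/eqP; rewrite -tofrac_eq; apply/eqP.
  rewrite rmorphM LC_morph rmorphM PD_morph hXY_morph rmorphM rmorphM PN_morph uuF_morph DL_morph !rmorph_nat.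
  rewrite -E2 in CIK; exact: CIK.
have := congr1 (horner_eval f) CIP.
rewrite rmorphM LC_morph rmorphM PD_morph hXY_morph rmorphM rmorphM PN_morph uuF_morph DL_morph !rmorph_nat.
by rewrite /= !horner_evalE !hornerC hornerX.
Qed.

Theorem mainTheorem13 (R : realType) (N : nat) (f a1 d1 d2 : R[i])
  (hb1 : not_nonpos_int ((f - 1) / 2))
  (hb2 : not_nonpos_int (f - a1))
  (hb3 : not_nonpos_int (f - d1))
  (hb4 : not_nonpos_int (f - d2))
  (hb5 : not_nonpos_int (2 + a1 + d1 + d2 - f - N%:R))
  (hb6 : not_nonpos_int (f + N%:R))
  (hden : d1 * d2 - (1 - f + d1 + d2 - N%:R) * (1 + d1 + d2 + a1 - f) != 0)
  (hrhs1 : poch (f - a1 - d1 - d2 - 1) N != 0)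
  (hrhs2 : poch ((1 - f + d1 + d2 - N%:R) * (1 + d1 + a1 - f) * (1 + d2 + a1 - f)
                 / (d1 * d2 - (1 - f + d1 + d2 - N%:R) * (1 + d1 + d2 + a1 - f))) N != 0) :
  let h := 1 - f + d1 + d2 - N%:R in
  let k := h * (1 + d1 + a1 - f) * (1 + d2 + a1 - f)
           / (d1 * d2 - h * (1 + d1 + d2 + a1 - f)) in
  hypergeomT
    [:: f - 1; (f + 1) / 2; a1; d1; d2; 2 * f - 2 - d1 - d2 - a1 + N%:R; - N%:R]
    [:: (f - 1) / 2; f - a1; f - d1; f - d2; 2 + a1 + d1 + d2 - f - N%:R; f + N%:R]
    1 N
  = (poch f N * poch (f - d1 - d2) N * poch (f - a1 - d1 - 1) N * poch (f - a1 - d2 - 1) N)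
    / (poch (f - d1) N * poch (f - d2) N * poch (f - a1) N * poch (f - a1 - d1 - d2 - 1) N)
    * (poch (k + 1) N / poch k N).
Proof.
move=> h k.
change (\sum_(n < N.+1) Tm f a1 d1 d2 N n =
  PN f a1 d1 d2 N / PD f a1 d1 d2 N * (poch (k + 1) N / poch k N)).
case: N => [|M] in hb5 hb6 hden hrhs1 hrhs2 h k *.
  by rewrite big_ord1 T0 /PN /PD !poch0 !mulr1 !invr1 !mulr1.
set N := M.+1.
rewrite -/h in hden hrhs2; rewrite -/k in hrhs2.
have hDLp : \prod_(x <- Ls 2^-1 f a1 d1 d2 N) poch x N != 0.
  rewrite /Ls !big_cons big_nil mulr1 !mulf_neq0 //; exact: poch_nonpos.
have hF : (N`!)%:R != 0 :> R[i] by rewrite pnatr_eq0 -lt0n fact_gt0.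
have hDL : DL 2^-1 f a1 d1 d2 N != 0 by rewrite /DL -fact_poch mulf_neq0.
have hPD : PD f a1 d1 d2 N != 0.
  by rewrite /PD !mulf_neq0 //; exact: poch_nonpos.
have hk0 : k != 0.
  move: hrhs2; rewrite /N -add1n poch_split pochS poch0 mul1r addr0.
  by rewrite mulf_eq0 negb_or => /andP [].
have hH : h * (1 + d1 + a1 - f) * (1 + d2 + a1 - f) != 0.
  by move: hk0; rewrite /k; apply: contra_neq => ->; rewrite mul0r.
have S1 := sumT_DL _ f a1 d1 d2 N hDLp hF.
have C1 := CI_C _ f a1 d1 d2 N.
have Hsum : \sum_(n < N.+1) Tm f a1 d1 d2 N n =
   PN f a1 d1 d2 N * uuF f a1 d1 d2 N%:R / (PD f a1 d1 d2 N * hXY f a1 d1 d2 N%:R).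
  apply: (mulIf hDL); rewrite S1.
  have hPH : PD f a1 d1 d2 N * hXY f a1 d1 d2 N%:R != 0 by rewrite mulf_neq0.
  apply: (mulIf hPH); rewrite C1; field.
  by rewrite hPD andbT; exact: hH.
have Ek : poch (k + 1) N / poch k N = (k + N%:R) / k.
  have E := @poch_shift _ k N.
  apply: (mulIf hk0); rewrite mulrAC [poch (k + 1) N * k]mulrC E; field.
  by rewrite hk0 hrhs2.
rewrite Hsum Ek /k /uuF /hXY -/h.
field.
move: hH; rewrite !mulf_eq0 !negb_or => /andP [/andP [-> ->] ->].
by rewrite hden /= (poch_nonpos _ _ N hb3) (poch_nonpos _ _ N hb4) (poch_nonpos _ _ N hb2) hrhs1.
Qed.
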